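(* Let $G$ be a connected graph of order $n\geq 4$ and let $k$ be an integer with $3\leq k\leq n$. Then $px_k(G)=n-1$ if and only if $G\cong S_n$, the star on $n$ vertices.
   Context: All graphs are finite, simple, undirected and connected. An edge-coloring of a graph assigns a color to each edge (adjacent edges may receive the same color). A tree in an edge-colored graph is proper if any two adjacent edges of the tree receive different colors. For $S\subseteq V(G)$, an $S$-tree is a subgraph of $G$ that is a tree containing all vertices of $S$. For a connected graph $G$ of order $n$ and an integer $k$ with $2\le k\le n$, an edge-coloring of $G$ is a $k$-proper coloring if for every set $S$ of $k$ vertices of $G$ there exists a proper $S$-tree in $G$. The $k$-proper index $px_k(G)$ is the minimum number of colors used in a $k$-proper coloring of $G$. The star $S_n$ is the tree $K_{1,n-1}$ on $n$ vertices. *)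

(* Defs.v *)
From mathcomp Require Import all_boot.
Set Implicit Arguments. Unset Strict Implicit. Unset Printing Implicit Defensive.

Definition simple_graph (T : finType) (e : rel T) : Prop :=
  symmetric e /\ irreflexive e.

Definition connected_graph (T : finType) (e : rel T) : Prop :=
  forall x y : T, connect e x y.

Definition edge_coloring (T : finType) (e : rel T) (c : T -> T -> nat) : Prop :=
  forall x y, e x y -> c x y = c y x.

Definition ncolors (T : finType) (e : rel T) (c : T -> T -> nat) : nat :=
  size (undup [seq c p.1 p.2 | p <- enum [pred p : T * T | e p.1 p.2]]).

Definition subgraph (T : finType) (e : rel T) (V : {set T}) (f : rel T) : Prop :=
  symmetric f /\ (forall x y, f x y -> [&& e x y, x \in V & y \in V]).

Definition is_tree (T : finType) (V : {set T}) (f : rel T) : Prop :=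
  [/\ V != set0,
      (forall x y, x \in V -> y \in V -> connect f x y) &
      ~ (exists p : seq T, [/\ uniq p, 2 < size p & cycle f p])].

Definition proper_tree (T : finType) (f : rel T) (c : T -> T -> nat) : Prop :=
  forall x y z, f x y -> f y z -> x != z -> c x y != c y z.

Definition has_proper_S_tree (T : finType) (e : rel T) (c : T -> T -> nat)
  (S : {set T}) : Prop :=
  exists (V : {set T}) (f : rel T),
    [/\ subgraph e V f, is_tree V f, S \subset V & proper_tree f c].

Definition k_proper_coloring (T : finType) (e : rel T) (k : nat)
  (c : T -> T -> nat) : Prop :=
  edge_coloring e c /\
  forall S : {set T}, #|S| = k -> has_proper_S_tree e c S.

Definition k_proper_with (T : finType) (e : rel T) (k m : nat) : Prop :=
  exists c, k_proper_coloring e k c /\ ncolors e c = m.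

Definition pxk_eq (T : finType) (e : rel T) (k m : nat) : Prop :=
  k_proper_with e k m /\ (forall m', k_proper_with e k m' -> m <= m').

(* The star S_n = K_{1,n-1} on vertex set 'I_n, with center 0. *)
Definition star_rel (n : nat) : rel 'I_n :=
  fun x y => (val x == 0) != (val y == 0).

Definition graph_iso (T U : finType) (e : rel T) (e' : rel U) : Prop :=
  exists f : T -> U, bijective f /\ forall x y, e' (f x) (f y) = e x y.

(* Main.v *)
Require Import Defs.
From mathcomp Require Import all_boot.
Set Implicit Arguments. Unset Strict Implicit. Unset Printing Implicit Defensive.

Fixpoint reach (T : finType) (e : rel T) (r : T) (i : nat) : {set T} :=
  if i is i'.+1 then reach e r i' :|: [set y | [exists x in reach e r i', e x y]]
  else [set r].

Lemma reach_path (T : finType) (e : rel T) (r : T) p :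
  forall y i, path e y p -> y \in reach e r i -> last y p \in reach e r (i + size p).
Proof.
elim: p => [|z p IH] y i /=; first by rewrite addn0.
case/andP=> eyz pz yi; rewrite addnS -addSn; apply: IH => //=.
rewrite in_setU; apply/orP; right; rewrite inE; apply/existsP; exists y; by rewrite yi.
Qed.

Lemma bfs (T : finType) (e : rel T) (r : T) : symmetric e -> connected_graph e ->
 exists (par : T -> T) (d : T -> nat),
  [/\ d r = 0, (forall x, d x = 0 -> x = r), (forall x, e r x -> d x <= 1)
    & (forall x, x != r -> e x (par x) /\ d (par x) < d x)].
Proof.
move=> esym conn.
have ex x : exists i, x \in reach e r i.
  have /connectP [p pp ->] := conn r x.
  exists (0 + size p); apply: reach_path => //=; by rewrite inE.
pose d x := ex_minn (ex x).
have dP x : x \in reach e r (d x) by rewrite /d; case: ex_minnP.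
have dmin x i : x \in reach e r i -> d x <= i by rewrite /d; case: ex_minnP => m _; apply.
have d0 x : d x = 0 -> x = r by move=> h; have := dP x; rewrite h /= inE => /eqP.
have step x : x != r -> exists y, e x y && (d y < d x).
  move=> xr; have := dP x; case E: (d x) => [|i].
    by move: (d0 _ E) => h; rewrite h eqxx in xr.
  rewrite /= in_setU => /orP [xi|].
    by have := dmin _ _ xi; rewrite E ltnn.
  rewrite inE => /existsP [y /andP [yi eyx]]; exists y; rewrite esym eyx /=.
  by have := dmin _ _ yi; rewrite ltnS.
exists (fun x => odflt r [pick y | e x y && (d y < d x)]), d; split.
- by apply/eqP; rewrite -leqn0; apply: dmin; rewrite inE.
- exact: d0.
- move=> x erx; apply: dmin => /=; rewrite in_setU; apply/orP; right.
  by rewrite inE; apply/existsP; exists r; rewrite inE eqxx.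
- move=> x xr; case: pickP => [y /= /andP [] | none] //.
  by have [y hy] := step x xr; rewrite none in hy.
Qed.

Lemma framework (T : finType) (e : rel T) r (par : T -> T) (d : T -> nat) (lab : T -> nat) z0 :
 simple_graph e ->
 (forall x, x != r -> e x (par x) /\ d (par x) < d x) ->
 z0 != r ->
 (forall a b, a != r -> b != r -> a != b -> [|| par a == b, par b == a | par a == par b] -> lab a != lab b) ->
 exists c, (forall k, k_proper_coloring e k c) /\ (forall x y, e x y -> exists2 v, v != r & c x y = lab v).
Proof.
move=> [esym eirr] hpar z0r hlab.
pose f : rel T := fun x y => ((x != r) && (par x == y)) || ((y != r) && (par y == x)).
pose c x y := if (y != r) && (par y == x) then lab y else if (x != r) && (par x == y) then lab x else lab z0.
have fsym : symmetric f by move=> x y; rewrite /f orbC.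
have noboth x y : (x != r) && (par x == y) -> (y != r) && (par y == x) -> False.
  case/andP=> xr /eqP px /andP [yr /eqP py].
  have := (hpar _ xr).2; have := (hpar _ yr).2; rewrite px py => h1 h2.
  by have := ltn_trans h1 h2; rewrite ltnn.
have c1 x y : (y != r) && (par y == x) -> c x y = lab y by rewrite /c => ->.
have c2 x y : (x != r) && (par x == y) -> c x y = lab x.
  move=> h; rewrite /c; case: ifP => [h'|_]; [by case: (noboth _ _ h h') | by rewrite h].
have csym x y : c x y = c y x.
  rewrite /c; case: ifP => h1; case: ifP => h2 //; by case: (noboth _ _ h2 h1).
exists c; split; last first.
  move=> x y exy; rewrite /c; case: ifP => [/andP [h _]|_]; first by exists y.
  case: ifP => [/andP [h _]|_]; first by exists x. by exists z0.
move=> k; split; first by move=> x y _; apply: csym.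
move=> S _; exists [set: T], f; split.
- split => // x y; rewrite !inE !andbT /f => /orP [/andP [xr /eqP <-]|/andP [yr /eqP <-]].
    exact: (hpar _ xr).1.
  by rewrite esym; exact: (hpar _ yr).1.
- split.
  + by apply/set0Pn; exists r.
  + have toroot x : connect f x r.
      move: {2}(d x) (leqnn (d x)) => n; elim: n x => [|n IH] x hx.
        case: (eqVneq x r) => [->|xr]; first exact: connect0.
        by have := leq_trans (hpar _ xr).2 hx.
      case: (eqVneq x r) => [->|xr]; first exact: connect0.
      apply: connect_trans (IH (par x) _); last by rewrite -ltnS (leq_trans (hpar _ xr).2).
      by apply: connect1; rewrite /f xr eqxx.
    move=> x y _ _; apply: connect_trans (toroot x) _.
    by rewrite (sym_connect_sym fsym); apply: toroot.
  + case=> p [up sp cp].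
    have [x0 [p0 p0E]] : exists x0 p0, p = x0 :: p0 by case: p up sp cp => // x0 p0; exists x0, p0.
    have x0p : x0 \in p by rewrite p0E mem_head.
    case: (arg_maxnP d x0p) => x xp xmax.
    case: (rot_to xp) => i s' rotE.
    have : uniq (x :: s') by rewrite -rotE rot_uniq.
    have : cycle f (x :: s') by rewrite -rotE rot_cycle.
    have : 2 < size (x :: s') by rewrite -rotE size_rot.
    have ins t : t \in s' -> t \in p by move=> ts; rewrite -(mem_rot i) rotE inE ts orbT.
    case: s' rotE ins => [|y [|a t]] //= rotE ins _.
    case/and3P=> fxy _; rewrite rcons_path => /andP [_ flx].
    case/and3P=> _ ynin _.
    have hx z : z \in p -> f x z -> par x = z.
      move=> zp; rewrite /f => /orP [/andP [_ /eqP //]|/andP [zr /eqP pz]].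
      have := (hpar _ zr).2; rewrite pz => h.
      have hle : d z <= d x := xmax _ zp. by rewrite leqNgt h in hle.
    have lz : last a t \in a :: t by apply: mem_last.
    have e1 := hx y (ins _ (mem_head _ _)) fxy.
    have lz2 : last a t \in [:: y, a & t] by rewrite inE lz orbT.
    have e2 := hx _ (ins _ lz2) ltac:(by rewrite fsym).
    by move: ynin; rewrite -e1 e2 lz.
- exact: subsetT.
- move=> x y z fxy fyz xz.
  move: fxy fyz; rewrite {1 2}/f.
  case/orP=> [hA|hB]; case/orP=> [hC|hD].
  + rewrite (c2 _ _ hA) (c2 _ _ hC).
    case/andP: hA => xr /eqP pxy; case/andP: hC => yr /eqP pyz.
    apply: hlab => //; last by rewrite pxy eqxx.
    by apply/eqP => exy; have := (hpar _ xr).2; rewrite pxy exy ltnn.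
  + rewrite (c2 _ _ hA) (c1 _ _ hD).
    case/andP: hA => xr /eqP pxy; case/andP: hD => zr /eqP pzy.
    by apply: hlab => //; rewrite pxy pzy eqxx !orbT.
  + case/andP: hB => _ /eqP pyx; case/andP: hC => _ /eqP pyz.
    by move: xz; rewrite -pyx pyz eqxx.
  + rewrite (c1 _ _ hB) (c1 _ _ hD).
    case/andP: hB => yr /eqP pyx; case/andP: hD => zr /eqP pzy.
    apply: hlab => //; last by rewrite pzy eqxx orbT.
    by apply/eqP => eyz; have := (hpar _ zr).2; rewrite pzy eyz ltnn.
Qed.

Lemma exists_out3 (T : finType) (r a b : T) : 3 < #|T| -> exists w, [&& w != r, w != a & w != b].
Proof.
move=> h; case: (boolP [exists w, [&& w != r, w != a & w != b]]) => [/existsP [w hw]|/existsPn H]; first by exists w.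
exfalso.
have sub : [set: T] \subset [:: r; a; b].
  apply/subsetP => w _; have := H w; rewrite !inE; by case: (w == r); case: (w == a); case: (w == b).
have := subset_leq_card sub; rewrite cardsT => h2.
have : #|[:: r; a; b]| <= 3 by apply: card_size.
by move=> h3; have := leq_trans h2 h3; rewrite leqNgt h.
Qed.

Lemma grow (T : finType) (A : {set T}) k : #|A| <= k <= #|T| -> exists S : {set T}, A \subset S /\ #|S| = k.
Proof.
move: {2}(k - #|A|) (erefl (k - #|A|)) => m; elim: m A => [|m IH] A hm /andP [h1 h2].
  exists A; split => //; apply/eqP; rewrite eqn_leq h1 /=; by rewrite -subn_eq0 hm.
have lt : #|A| < k by rewrite -subn_gt0 hm.
have : 0 < #|~: A|.
  have := cardsC A; move=> E; rewrite -(ltn_add2l #|A|) addn0 E; exact: leq_trans lt h2.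
rewrite card_gt0 => /set0Pn [x]; rewrite inE => xA.
have [S [sub cS]] : exists S : {set T}, x |: A \subset S /\ #|S| = k.
  apply: IH; rewrite ?cardsU1 ?xA /=.
    by rewrite add1n subnS hm.
  rewrite h2 andbT add1n; rewrite ltn_neqAle h1 andbT; apply/eqP => E; by rewrite E subnn in hm.
exists S; split => //; apply: subset_trans sub; apply: subsetUr.
Qed.

Lemma ncolors_le (T : finType) (e : rel T) c (s : seq nat) :
  (forall x y, e x y -> c x y \in s) -> ncolors e c <= size (undup s).
Proof.
move=> h; apply: uniq_leq_size; first exact: undup_uniq.
move=> z; rewrite !mem_undup => /mapP [[x y]]; rewrite mem_enum /= => exy ->.
exact: h.
Qed.

Lemma first_step (T : finType) (f : rel T) a b : connect f a b -> a != b -> exists y, f a y.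
Proof.
case/connectP => [[|y p]] /=; first by move=> _ -> ; rewrite eqxx.
by case/andP=> fay _ _ _; exists y.
Qed.

Lemma star_lower (T : finType) (e : rel T) r k c :
  (forall x y, e x y = ((x == r) != (y == r))) -> 2 <= k <= #|T| ->
  k_proper_coloring e k c -> #|T| - 1 <= ncolors e c.
Proof.
move=> eE /andP [k2 kn] [ec kp].
have key a b : a != r -> b != r -> a != b -> c r a != c r b.
  move=> ar br ab.
  have [S [sub cS]] : exists S : {set T}, [set a; b] \subset S /\ #|S| = k.
    by apply: grow; rewrite cards2 ab kn andbT.
  have [V [f [[fsym fsub] [_ conV _] SV prop]]] := kp S cS.
  have aV : a \in V by apply: (subsetP SV); apply: (subsetP sub); rewrite !inE eqxx.
  have bV : b \in V by apply: (subsetP SV); apply: (subsetP sub); rewrite !inE eqxx orbT.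
  have nb x y : x != r -> f x y -> y = r.
    move=> xr /fsub /and3P [exy _ _]; apply/eqP; move: exy; rewrite eE (negbTE xr).
    by case: (y == r).
  have [y fay] := first_step (conV _ _ aV bV) ab.
  have [z fbz] := first_step (conV _ _ bV aV) ltac:(by rewrite eq_sym).
  have := nb _ _ ar fay; have := nb _ _ br fbz => ez ey; subst y z.
  rewrite fsym in fbz.
  have := prop _ _ _ fay fbz ab; rewrite ec //.
  by rewrite eE eqxx (negbTE ar).
pose M := [seq c r a | a <- enum (predC1 r)].
have uM : uniq M.
  rewrite map_inj_in_uniq ?enum_uniq // => a b; rewrite !mem_enum /= => ar br.
  by move=> E; case: (eqVneq a b) => // ab; have := key _ _ ar br ab; rewrite E eqxx.
have := uniq_leq_size uM; rewrite size_map -cardE cardC1 -subn1; apply.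
move=> z /mapP [a]; rewrite mem_enum /= => ar ->.
rewrite /ncolors mem_undup; apply/mapP; exists (r, a) => //.
by rewrite mem_enum inE /= eE eqxx eq_sym (negbTE ar).
Qed.

Definition idx (T : finType) (v : T) : nat := val (enum_rank v).

Lemma idx_inj (T : finType) : injective (@idx T).
Proof. by move=> a b /val_inj /enum_rank_inj. Qed.

Lemma star_px (T : finType) (e : rel T) r k :
  (forall x y, e x y = ((x == r) != (y == r))) -> 2 <= k <= #|T| ->
  pxk_eq e k (#|T| - 1).
Proof.
move=> eE hk.
have sg : simple_graph e.
  by split => [x y|x]; rewrite !eE; [rewrite eq_sym | rewrite eqxx].
have [z0 z0r] : exists z0, z0 != r.
  have : 0 < #|predC1 r|.
    rewrite cardC1; case/andP: hk => k2 kn; move: (leq_trans k2 kn); by case: #|T| => [|[]].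
  by case/card_gt0P => z; rewrite inE => zr; exists z.
have [c [kp cols]] := @framework T e r (fun _ => r) (fun x => (x != r : nat)) (@idx T) z0 sg
  ltac:(by move=> x xr; rewrite eE eqxx (negbTE xr)) z0r
  ltac:(by move=> a b _ _ ab _; apply: contra ab => /eqP /idx_inj ->).
have lo := star_lower eE hk (kp k).
split.
  exists c; split => //; apply/eqP; rewrite eqn_leq lo andbT.
  pose s := [seq idx v | v <- enum (predC1 r)].
  have H : ncolors e c <= size (undup s).
    by apply: ncolors_le => x y /cols [v vr ->]; apply: map_f; rewrite mem_enum.
  apply: leq_trans H _; apply: leq_trans (size_undup _) _.
  by rewrite size_map -cardE cardC1 subn1.
move=> m' [c' [kp' <-]]; exact: star_lower eE hk kp'.
Qed.

Lemma finish (T : finType) (e : rel T) r u w (par : T -> T) (d : T -> nat) k :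
 simple_graph e ->
 (forall x, x != r -> e x (par x) /\ d (par x) < d x) ->
 u != r -> w != r -> u != w -> par u != par w -> par u != w -> par w != u ->
 exists c, k_proper_coloring e k c /\ ncolors e c <= #|T| - 2.
Proof.
move=> sg hpar ur wr uw p1 p2 p3.
pose lab v := if v == u then idx w else idx v.
have hlab : forall a b, a != r -> b != r -> a != b ->
   [|| par a == b, par b == a | par a == par b] -> lab a != lab b.
  move=> a b ar br ab adj; rewrite /lab.
  case: (eqVneq a u) => [au|au]; case: (eqVneq b u) => [bu|bu].
  - by rewrite au bu eqxx in ab.
  - apply/negP => /eqP /idx_inj wb; subst a b.
    by case/or3P: adj => /eqP E; move: p1 p2 p3; rewrite E ?eqxx.
  - apply/negP => /eqP /idx_inj aw; subst a b.
    by case/or3P: adj => /eqP E; move: p1 p2 p3; rewrite E ?eqxx.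
  - by apply: contra ab => /eqP /idx_inj ->.
have [c [kp cols]] := framework sg hpar wr hlab.
exists c; split => //.
pose s := [seq idx v | v <- enum ([set~ r] :\ u)].
have H : ncolors e c <= size (undup s).
  apply: ncolors_le => x y /cols [v vr ->]; rewrite /lab; case: ifP => [_|/negbT vu]; apply: map_f;
  by rewrite mem_enum !inE ?wr ?vr ?vu // eq_sym uw.
apply: leq_trans H _; apply: leq_trans (size_undup _) _.
rewrite size_map -cardE.
have := cardsD1 u [set~ r]; rewrite cardsC1 !inE ur add1n => E.
by rewrite -[2]/(1 + 1) subnDA !subn1 E.
Qed.
From mathcomp Require Import fingroup perm.

Lemma iso_star (T : finType) (e : rel T) : 0 < #|T| -> graph_iso e (@star_rel #|T|) ->
  exists r, forall x y, e x y = ((x == r) != (y == r)).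
Proof.
move=> n0 [f [[g fg gf] H]].
pose o0 : 'I_#|T| := Ordinal n0.
exists (g o0).
have key x : (val (f x) == 0) = (x == g o0).
  apply/eqP/eqP.
    by move=> h; rewrite -[x]fg; congr g; apply: val_inj.
  by move=> ->; rewrite gf.
by move=> x y; rewrite -H /star_rel !key.
Qed.

Lemma star_iso (T : finType) (e : rel T) r : 0 < #|T| ->
  (forall x y, e x y = ((x == r) != (y == r))) -> graph_iso e (@star_rel #|T|).
Proof.
move=> n0 eE.
pose o0 : 'I_#|T| := Ordinal n0.
pose t := tperm (enum_rank r) o0.
pose f x := t (enum_rank x).
have bf : bijective f.
  exists (fun i => enum_val (t i)) => [x|i]; rewrite /f.
    by rewrite tpermK enum_rankK.
  by rewrite enum_valK tpermK.
exists f; split => // x y.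
have key z : (val (f z) == 0) = (z == r).
  have -> : (val (f z) == 0) = (f z == o0) by [].
  have -> : o0 = f r by rewrite /f tpermL.
  by rewrite (inj_eq (bij_inj bf)).
by rewrite /star_rel !key eE.
Qed.

Lemma nonstar (T : finType) (e : rel T) k : simple_graph e -> connected_graph e -> 3 < #|T| ->
  ~~ [exists r, [forall x, [forall y, e x y == ((x == r) != (y == r))]]] ->
  exists c, k_proper_coloring e k c /\ ncolors e c <= #|T| - 2.
Proof.
move=> sg conn n4 nst; have [esym eirr] := sg.
have nst' r : exists x y, e x y != ((x == r) != (y == r)).
  move: nst => /existsPn /(_ r) /forallPn [x /forallPn [y h]]; by exists x, y.
case: (boolP [exists r, [forall x, (x != r) ==> e r x]]) => [/existsP [r /forallP dom]|/existsPn ndom].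
  have [a [b hab]] := nst' r.
  have nr z : z != r -> e r z by move=> zr; exact: (implyP (dom z) zr).
  have ar : a != r.
    apply/eqP => ar; subst a; move: hab; rewrite eqxx.
    case: (eqVneq b r) => [->|br]; first by rewrite eirr.
    by rewrite nr.
  have br : b != r.
    apply/eqP => br; subst b; move: hab; rewrite eqxx (negbTE ar) esym nr //.
  have eab : e a b by move: hab; rewrite (negbTE ar) (negbTE br); case: (e a b).
  have ab : a != b by apply: contraTneq eab => ->; rewrite eirr.
  have [w /and3P [wr wa wb]] := exists_out3 r a b n4.
  pose par x := if x == b then a else r.
  pose d x := if x == r then 0 else if x == b then 2 else 1.
  apply: (@finish T e r b w par d) => //.
  - move=> x xr; rewrite /par /d; case: (eqVneq x b) => [->|xb].
      by rewrite esym eab (negbTE ar) (negbTE ab) (negbTE br).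
    by rewrite esym nr // eqxx (negbTE xr).
  - by rewrite eq_sym.
  - by rewrite /par eqxx (negbTE wb).
  - by rewrite /par eqxx eq_sym.
  - by rewrite /par (negbTE wb) eq_sym.
have nd r : exists v, (v != r) && ~~ e r v.
  move: (ndom r) => /forallPn [v]; rewrite negb_imply => h; by exists v.
have [r0 _] : exists r0 : T, true.
  have : 0 < #|T| by apply: leq_trans n4.
  by case/card_gt0P => z _; exists z.
have [par0 [d0 [_ _ _ hp0]]] := bfs r0 esym conn.
have [v /andP [vr0 nev]] := nd r0.
set p := par0 v.
have evp : e v p := (hp0 _ vr0).1.
have pr0 : p != r0 by apply: contraNneq nev => <-; rewrite esym.
set q := par0 p.
have epq : e p q := (hp0 _ pr0).1.
have vq : v != q.
  apply/eqP => vq; have := (hp0 _ vr0).2; have := (hp0 _ pr0).2.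
  rewrite -/p -/q -vq => h1 h2; have := ltn_trans h1 h2; by rewrite ltnn.
have [par [d [dp zp onep hpp]]] := bfs p esym conn.
have nbr a : e p a -> par a = p.
  move=> epa; have ap : a != p by apply: contraTneq epa => ->; rewrite eirr.
  have := (hpp _ ap).2; have := onep _ epa => h1 h2.
  by apply: zp; apply/eqP; rewrite -leqn0 -ltnS (leq_trans h2 h1).
have [u /andP [up neu]] := nd p.
pose w := if par u == v then q else v.
have epw : e p w by rewrite /w; case: ifP => _ //; rewrite esym.
apply: (@finish T e p u w par d) => //.
- by apply: contraTneq epw => ->; rewrite eirr.
- by apply: contraNneq neu => ->.
- rewrite (nbr _ epw); by apply: contraNneq neu => <-; rewrite esym (hpp _ up).1.
- rewrite /w; case: ifP => [/eqP -> //|/negbT //]; by rewrite eq_sym.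
- rewrite (nbr _ epw); by rewrite eq_sym.
Qed.

Theorem mainTheorem16 (T : finType) (e : rel T) (k : nat) :
  simple_graph e -> connected_graph e ->
  4 <= #|T| -> 3 <= k -> k <= #|T| ->
  (pxk_eq e k (#|T| - 1) <-> graph_iso e (@star_rel #|T|)).
Proof.
move=> sg conn n4 k3 kn.
have n0 : 0 < #|T| by apply: leq_trans n4.
split.
  move=> [_ minm].
  case: (boolP [exists r, [forall x, [forall y, e x y == ((x == r) != (y == r))]]]) =>
    [/existsP [r /forallP H]|nst].
    apply: (star_iso (r := r)) => // x y; exact/eqP/(forallP (H x)).
  have [c [kp le]] := nonstar k sg conn n4 nst.
  have := minm _ (ex_intro _ c (conj kp erefl)) => h.
  have := leq_trans h le; move: n4; case: #|T| => [|[|[|[|m]]]] //= _.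
  by rewrite !subSS !subn0 ltnn.
case/(iso_star n0) => r eE; apply: (star_px eE).
by rewrite kn andbT (leq_trans _ k3).
Qed.
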